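(* Fix $R>0$. Then $E_{\mathcal A}(n,R)$ and $E_{\mathcal D}(n,R)$ are defined for all sufficiently large $n$, and: 1. If $R\ge1$, then $\lim_{n\to\infty}E_{\mathcal A}(n,R)=\frac{(2R-1)(R+1)}{2R^2}$ and $\lim_{n\to\infty}E_{\mathcal D}(n,R)=\frac{R+1}{2R}$. 2. If $R\le1$, then $\lim_{n\to\infty}E_{\mathcal A}(n,R)=\frac{R+1}{2}$ and $\lim_{n\to\infty}E_{\mathcal D}(n,R)=\frac{(2-R)(R+1)}{2}$.
   Context: For $x,y>0$, $\mathrm{less}(x,y)=y(\lceil x/y\rceil-1)$ and $\mathrm{less}(x)=\mathrm{less}(x,1)$. For positive integers $n$ with $\frac1n<R\le n$, let $\ell_1=\mathrm{less}(2n-\frac2R+1)$ and $\ell_2=\min\{n,\lfloor n/R\rfloor\}$. For $\ell=1,\dots,n$, let $R_\ell=\mathrm{less}(R,\frac{2}{\ell(\ell+1)})$ and $f(\ell)=n-\ell+\frac{\ell(\ell+1)R_\ell}{2n}$. Let $\mathrm{equilibrium}(n,R)=\ell_1/n$ if $\frac1n<R\le\frac2{n+1}$, and $\mathrm{equilibrium}(n,R)=f(\ell_2)$ if $\frac2{n+1}<R\le n$. This is the optimal expected number of objects won by the adversary bidder, of budget $R\beta$, against the disadvantaged bidder, of budget $\beta$, in the two-bidder position-randomized auction with $n$ objects. Define the effective winning ratios $$E_{\mathcal A}(n,R)=\frac{\mathrm{equilibrium}(n,R)}{nR/(R+1)},\qquad E_{\mathcal D}(n,R)=\frac{n-\mathrm{equilibrium}(n,R)}{n/(R+1)}.$$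 *)

(* Defs.v *)
From HB Require Import structures.
From mathcomp Require Import all_boot all_order all_algebra.
From mathcomp Require Import all_classical all_reals all_analysis.
Set Implicit Arguments. Unset Strict Implicit. Unset Printing Implicit Defensive.
Import Order.TTheory GRing.Theory Num.Theory.
Local Open Scope ring_scope.

Section Defs.
Variable K : realType.

Definition less2 (x y : K) : K := y * ((Num.ceil (x / y))%:~R - 1).
Definition less1 (x : K) : K := less2 x 1.

Definition ell1 (n : nat) (R : K) : K := less1 (2 * n%:R - 2 / R + 1).
Definition ell2 (n : nat) (R : K) : K :=
  Num.min (n%:R) ((Num.floor (n%:R / R))%:~R).
Definition Rl (R l : K) : K := less2 R (2 / (l * (l + 1))).
Definition fl (n : nat) (R l : K) : K :=
  n%:R - l + l * (l + 1) * Rl R l / (2 * n%:R).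

(* meaningful for 1/n < R <= n *)
Definition equilibrium (n : nat) (R : K) : K :=
  if R <= 2 / (n%:R + 1) then ell1 n R / n%:R else fl n R (ell2 n R).

Definition EA (n : nat) (R : K) : K := equilibrium n R / (n%:R * R / (R + 1)).
Definition ED (n : nat) (R : K) : K := (n%:R - equilibrium n R) / (n%:R / (R + 1)).
End Defs.

(* Main.v *)
Require Import Defs.
From HB Require Import structures.
From mathcomp Require Import all_boot all_order all_algebra.
From mathcomp Require Import all_classical all_reals all_analysis.
From mathcomp Require Import ring lra.
Import Order.TTheory GRing.Theory Num.Theory numFieldNormedType.Exports.
Local Open Scope classical_set_scope.
Local Open Scope ring_scope.

Lemma less2_bound (K : realType) (R ll : K) : 0 < ll ->
  ll*R - 2 <= ll * less2 R (2/ll) <= ll * R.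
Proof.
move=> hll; rewrite /less2.
set c := Num.ceil (R / (2/ll)).
have h1 : R/(2/ll) <= c%:~R := ceil_ge _.
have h2 : (c - 1)%:~R < R/(2/ll) := ceilB1_lt _.
rewrite rmorphB /= in h2.
have e : R/(2/ll) = R*ll/2 by field; rewrite lt0r_neq0.
rewrite e in h1 h2.
have -> : ll * (2/ll * (c%:~R - 1)) = 2*(c%:~R - 1) by field; rewrite lt0r_neq0.
apply/andP; split; lra.

Qed.
Lemma bound1 (K : realType) (R : K) (n : nat) : 1 <= R -> R + 2 + 2/R <= n%:R ->
  `|(1 - 1/(2*R)) * n%:R - equilibrium n R| <= R + 2.
Proof.
move=> R1 hn.
have R0 : 0 < R by lra.
have R2 : 0 < 2/R by rewrite divr_gt0.
have n0 : 0 < n%:R :> K by lra.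
have nR : 2 <= R * n%:R.
  have : 2/R <= n%:R by lra.
  by rewrite ler_pdivrMr // mulrC.
have hif : (R <= 2 / (n%:R + 1)) = false.
  apply/negbTE; rewrite -ltNge ltr_pdivrMr; last lra. nra.
rewrite /equilibrium hif /ell2.
set l := (Num.floor (n%:R / R))%:~R.
have hl1 : l <= n%:R / R by exact: floor_le.
have hl2 : n%:R / R < l + 1 by have := floorD1_gt (n%:R / R); rewrite rmorphD.
have hl1' : l * R <= n%:R by rewrite -ler_pdivlMr.
have hl2' : n%:R < (l + 1) * R by rewrite -ltr_pdivrMr.
have lmin : Num.min n%:R l = l.
  by apply: min_r; apply: (le_trans hl1); rewrite ler_pdivrMr // ler_pMr.
rewrite lmin /fl /Rl.
have lR2 : 2 < l * R by nra.
have l0 : 0 < l by nra.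
have ll0 : 0 < l * (l + 1) by nra.
have := @less2_bound _ R _ ll0; set Q := less2 _ _ => /andP[q1 q2].
set N := n%:R.
have -> : (1 - 1/(2*R)) * N - (N - l + l * (l + 1) * Q / (2 * N))
   = - ((N^+2 - 2*N*(l*R) + l*(l+1)*Q*R) / (2*N*R)).
  by field; rewrite ?lt0r_neq0 //; nra.
rewrite normrN normrM normfV (@gtr0_norm _ (2*N*R)); last nra.
rewrite ler_pdivrMr; last nra.
have QR1 : l*(l+1)*R*R - 2*R <= l*(l+1)*Q*R by nra.
have QR2 : l*(l+1)*Q*R <= l*(l+1)*R*R by nra.
rewrite ler_norml; apply/andP; split; nra.
Qed.

Lemma bound2 (K : realType) (R : K) (n : nat) : 0 < R -> R <= 1 -> R + 2 + 2/R <= n%:R ->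
  `|(R / 2) * n%:R - equilibrium n R| <= R + 2.
Proof.
move=> R0 R1 hn.
have R2 : 0 < 2/R by rewrite divr_gt0.
have n0 : 0 < n%:R :> K by lra.
have nR : 2 <= R * n%:R.
  have : 2/R <= n%:R by lra.
  by rewrite ler_pdivrMr // mulrC.
have hif : (R <= 2 / (n%:R + 1)) = false.
  apply/negbTE; rewrite -ltNge ltr_pdivrMr; last lra. nra.
rewrite /equilibrium hif /ell2.
have lmin : Num.min (n%:R : K) (Num.floor (n%:R / R))%:~R = n%:R.
  apply: min_l.
  have -> : n%:R = ((n%:Z)%:~R : K) by rewrite pmulrn.
  rewrite ler_int floor_ge_int ler_pdivlMr //.
  rewrite (_ : (n%:Z)%:~R = n%:R :> K) //; nra.
rewrite lmin /fl /Rl.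
have ll0 : 0 < n%:R * (n%:R + 1) :> K by nra.
have := @less2_bound _ R _ ll0; set Q := less2 _ _ => /andP[q1 q2].
set N := n%:R.
have -> : R / 2 * N - (N - N + N * (N + 1) * Q / (2 * N))
   = - ((N * (N + 1) * Q - N^+2 * R) / (2*N)).
  by field; rewrite ?lt0r_neq0 //; nra.
rewrite normrN normrM normfV (@gtr0_norm _ (2*N)); last nra.
rewrite ler_pdivrMr; last nra.
rewrite ler_norml; apply/andP; split; nra.
Qed.

Lemma lim_bound (K : realType) (u : nat -> K) (L C : K) :
  (\forall n \near \oo, `|L * n%:R - u n| <= C) -> u n / n%:R @[n --> \oo] --> L.
Proof.
move=> hB; apply/cvgrPdist_le => e e0.
near=> n.
have hn : `|C| / e + 1 <= n%:R by near: n; exact: nbhs_infty_ger.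
have hb : `|L * n%:R - u n| <= C by near: n.
have Ce : 0 <= `|C| / e by rewrite divr_ge0 // ltW.
have n0 : 0 < n%:R :> K by lra.
have -> : L - u n / n%:R = (L * n%:R - u n) / n%:R by field; rewrite lt0r_neq0.
rewrite normrM normfV (gtr0_norm n0) ler_pdivrMr //.
apply: (le_trans hb); apply: (le_trans (ler_norm C)).
have : `|C| / e <= n%:R by lra.
by rewrite ler_pdivrMr // mulrC.
Unshelve. all: by end_near.
Qed.

Theorem corollary1 (K : realType) (R : K) (hR : 0 < R) :
  (\forall n \near \oo, 1 / (n%:R : K) < R <= n%:R) /\
  (1 <= R ->
     EA n R @[n --> \oo] --> ((2 * R - 1) * (R + 1) / (2 * R ^+ 2) : K) /\
     ED n R @[n --> \oo] --> ((R + 1) / (2 * R) : K)) /\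
  (R <= 1 ->
     EA n R @[n --> \oo] --> ((R + 1) / 2 : K) /\
     ED n R @[n --> \oo] --> ((2 - R) * (R + 1) / 2 : K)).
Proof.
have R2 : 0 < 2/R by rewrite divr_gt0.
have big : \forall n \near \oo, R + 2 + 2/R <= (n%:R : K) by exact: nbhs_infty_ger.
have EAE : (fun n => EA n R) = (fun n => equilibrium n R / n%:R * ((R + 1) / R)).
  apply: funext => n; rewrite /EA !invfM invrK; ring.
have EDE : (fun n => ED n R) = (fun n => (n%:R - equilibrium n R) / n%:R * (R + 1)).
  apply: funext => n; rewrite /ED !invfM invrK; ring.
have key : forall L : K, (\forall n \near \oo, `|L * n%:R - equilibrium n R| <= R + 2) ->
    EA n R @[n --> \oo] --> L * ((R + 1) / R) /\
    ED n R @[n --> \oo] --> (1 - L) * (R + 1).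
  move=> L hL; rewrite EAE EDE; split.
    by apply: cvgMr_tmp; apply: lim_bound hL.
  apply: cvgMr_tmp; apply: (@lim_bound _ _ _ (R + 2)).
  apply: filterS hL => n; rewrite -normrN; congr (_ <= _); congr `|_|; ring.
split.
  apply: filterS big => n hn.
  have n0 : 0 < n%:R :> K by lra.
  apply/andP; split; last by lra.
  rewrite ltr_pdivrMr // mulrC -ltr_pdivrMr //.
  have : 0 < 1 / R by rewrite divr_gt0.
  have : 1 / R < 2 / R by rewrite ltr_pM2r ?invr_gt0 // ltr1n.
  lra.
split => hR1.
  have [h1 h2] := key (1 - 1/(2*R)) (filterS (fun n => @bound1 _ R n hR1) big).
  split.
    by have -> : (2 * R - 1) * (R + 1) / (2 * R ^+ 2) = (1 - 1/(2*R)) * ((R+1)/R)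
      by field; rewrite lt0r_neq0.
  by have -> : (R + 1) / (2 * R) = (1 - (1 - 1/(2*R))) * (R + 1)
      by field; rewrite lt0r_neq0.
have [h1 h2] := key (R / 2) (filterS (fun n => @bound2 _ R n hR hR1) big).
split.
  by have -> : (R + 1) / 2 = R / 2 * ((R+1)/R) by field; rewrite lt0r_neq0.
by have -> : (2 - R) * (R + 1) / 2 = (1 - R / 2) * (R + 1) by field.
Qed.
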